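(* Let $W_2\in\{M_2,S_2\}$ and let $\phi:W_{2}\rightarrow W_{2}$ be a linear map that preserves the L-spectrum, i.e. $\sigma_{\mathcal{K}}(\phi(A))=\sigma_{\mathcal{K}}(A)$ for all $A\in W_2$. Then \[ \phi(E_{11})= \begin{bmatrix} 1-a & \mp\sqrt{a^{2}-a}\\ \pm\sqrt{a^{2}-a} & a \end{bmatrix},\quad \phi(E_{22})= \begin{bmatrix} a & \pm\sqrt{a^{2}-a}\\ \mp\sqrt{a^{2}-a} & 1-a \end{bmatrix} \] for some $a\leq 0$, and \[ \phi(E_{12}+E_{21})= \begin{bmatrix} m & r\\ -r\pm 2 & -m \end{bmatrix} \] for some $m,r\in\mathbb{R}$. In particular, if $W_{2}=S_{2}$, then $\phi(E_{11})=E_{11}$, $\phi(E_{22})=E_{22}$, and \[ \phi(E_{12}+E_{21})= \begin{bmatrix} m & r\\ r & -m \end{bmatrix} \] for some $m\in\mathbb{R}$ and $r\in\{-1,1\}$.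
   Context: $M_2$ is the space of $2\times 2$ real matrices and $S_2$ its subspace of symmetric matrices. The Lorentz cone in $\mathbb{R}^2$ is $\mathcal{K}=\{(x_1,x_2)\in\mathbb{R}^2: |x_1|\le x_2\}$. For $A\in M_2$, a scalar $\lambda\in\mathbb{R}$ is a Lorentz eigenvalue (L-eigenvalue) of $A$ if there is a nonzero $x\in\mathbb{R}^2$ with $x\in\mathcal{K}$, $(A-\lambda I)x\in\mathcal{K}$ and $x^T(A-\lambda I)x=0$; the set of all L-eigenvalues of $A$ is the L-spectrum $\sigma_{\mathcal{K}}(A)$. For $i,j\in\{1,2\}$, $E_{ij}$ denotes the $2\times 2$ matrix whose only nonzero entry is a $1$ in position $(i,j)$. The signs $\pm,\mp$ in $\phi(E_{11})$ and $\phi(E_{22})$ are chosen consistently (upper signs together or lower signs together). *)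

(* Defs.v *)
From HB Require Import structures.
From mathcomp Require Import all_boot all_order all_algebra.
From mathcomp Require Import reals.
Set Implicit Arguments. Unset Strict Implicit. Unset Printing Implicit Defensive.
Import Order.TTheory GRing.Theory Num.Theory.
Local Open Scope ring_scope.

Definition lorentz (R : realType) (x : 'cV[R]_2) : Prop :=
  `|x ord0 ord0| <= x ord_max ord0.

Definition Leig (R : realType) (A : 'M[R]_2) (l : R) : Prop :=
  exists x : 'cV[R]_2, [/\ x != 0, lorentz x,
     lorentz ((A - l%:M) *m x) & x^T *m (A - l%:M) *m x = 0].

Definition Lspectrum (R : realType) (A : 'M[R]_2) : R -> Prop := Leig A.

Definition E (R : realType) (i j : 'I_2) : 'M[R]_2 := delta_mx i j.

Definition mx2 (R : realType) (a b c d : R) : 'M[R]_2 :=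
  \matrix_(i < 2, j < 2)
    if (i == ord0) then (if (j == ord0) then a else b)
    else (if (j == ord0) then c else d).

(* the domain W_2: all of M_2 (sym = false) or S_2 (sym = true) *)
Definition inW (R : realType) (sym : bool) (A : 'M[R]_2) : Prop :=
  sym -> A^T = A.

(* Main.v *)
Require Import Defs.
From HB Require Import structures.
From mathcomp Require Import all_boot all_order all_algebra.
From mathcomp Require Import reals.
From mathcomp Require Import ring lra.
Import Order.TTheory GRing.Theory Num.Theory.
Local Open Scope ring_scope.

Section Aux.
Variable R : realType.

Lemma I2 (i : 'I_2) : i = ord0 \/ i = ord_max.
Proof. case: i => [[|[|n]]] Hi; [left|right|by []]; exact: val_inj. Qed.

Lemma lift00 : lift ord0 (ord0 : 'I_1) = ord_max :> 'I_2.
Proof. exact: val_inj. Qed.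

Definition Sig (b0 b1 b2 b3 l : R) := exists x1 x2 : R,
  [/\ 0 < x2, `|x1| <= x2,
      `|(b0 - l) * x1 + b1 * x2| <= b2 * x1 + (b3 - l) * x2 &
      x1 * ((b0 - l) * x1 + b1 * x2) + x2 * (b2 * x1 + (b3 - l) * x2) = 0].

Definition col2 (x1 x2 : R) : 'cV[R]_2 :=
  \matrix_(i < 2, j < 1) (if i == ord0 then x1 else x2).

Lemma Leig_iff (B : 'M[R]_2) l : Leig B l <->
  Sig (B ord0 ord0) (B ord0 ord_max) (B ord_max ord0) (B ord_max ord_max) l.
Proof.
have Ey : forall x : 'cV[R]_2, forall i,
   ((B - l%:M) *m x) i ord0 = (B i ord0 - l *+ (i == ord0)) * x ord0 ord0
        + (B i ord_max - l *+ (i == ord_max)) * x ord_max ord0.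
  move=> x i; rewrite !mxE !big_ord_recl big_ord0 lift00 !mxE addr0.
  by [].
have Eq : forall x : 'cV[R]_2,
   (x^T *m (B - l%:M) *m x) ord0 ord0 =
     x ord0 ord0 * ((B - l%:M) *m x) ord0 ord0
   + x ord_max ord0 * ((B - l%:M) *m x) ord_max ord0.
  move=> x; rewrite -mulmxA [in LHS]mxE !big_ord_recl big_ord0 lift00 addr0.
  by rewrite !(mxE (trmx_key)) /=.
split.
- case=> x [xn0 lx ly hq].
  exists (x ord0 ord0), (x ord_max ord0).
  move: ly; rewrite /lorentz !Ey /= => ly.
  move: lx; rewrite /lorentz => lx.
  have hq' := congr1 (fun M : 'M[R]_1 => M ord0 ord0) hq.
  move: hq'; rewrite /= Eq !Ey mxE /= => hq'.
  split.
  + rewrite lt_neqAle (le_trans (normr_ge0 _) lx) andbT.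
    apply/eqP => h0; move/eqP: xn0; apply; apply/matrixP => i j.
    rewrite !mxE (ord1 j); case: (I2 i) => ->; last by rewrite -h0.
    by apply/eqP; rewrite -normr_eq0 eq_le normr_ge0 andbT h0 lx.
  + exact: lx.
  + by move: ly; rewrite !mulr0n !mulr1n !subr0.
  + by move: hq'; rewrite !mulr0n !mulr1n !subr0.
- case=> x1 [x2 [hx2 lx ly hq]].
  exists (col2 x1 x2); split.
  + apply/eqP => h; move: hx2; have := congr1 (fun M : 'M[R]_(2,1) => M ord_max ord0) h.
    by rewrite !mxE /= => ->; rewrite ltxx.
  + by rewrite /lorentz !mxE.
  + rewrite /lorentz !Ey !mxE /= !mulr0n !mulr1n !subr0. exact: ly.
  + apply/matrixP => i j; rewrite (ord1 i) (ord1 j) Eq !Ey !mxE /= !mulr0n !mulr1n !subr0.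
    exact: hq.
Qed.
Lemma sig_sub b0 b1 b2 b3 l : Sig b0 b1 b2 b3 l ->
  (b0 - l) * (b3 - l) - b1 * b2 = 0 \/
  (2 * l = b0 + b1 + b2 + b3 /\ 0 <= b2 + b3 - b0 - b1) \/
  (2 * l = b0 - b1 - b2 + b3 /\ 0 <= - b0 + b1 - b2 + b3).
Proof.
case=> x1 [x2 [hx2 lx ly hq]].
set y1 := (b0 - l) * x1 + b1 * x2 in ly hq.
set y2 := b2 * x1 + (b3 - l) * x2 in ly hq.
have hy2 : 0 <= y2 by exact: le_trans (normr_ge0 _) ly.
case: (lerP y2 0) => hy20.
  have y20 : y2 = 0 by lra.
  have y10 : y1 = 0 by apply/eqP; rewrite -normr_eq0 eq_le normr_ge0 andbT -y20.
  left.
  have : ((b0 - l) * (b3 - l) - b1 * b2) * x2 = 0.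
    have -> : ((b0 - l) * (b3 - l) - b1 * b2) * x2 = (b0 - l) * y2 - b2 * y1.
      by rewrite /y1 /y2; ring.
    by rewrite y10 y20; ring.
  by move/eqP; rewrite mulf_eq0 (gt_eqF hx2) orbF => /eqP.
right.
have hx1y1 : x1 * y1 = - (x2 * y2) by lra.
have hn : `|x1| * `|y1| = x2 * y2.
  by rewrite -normrM hx1y1 normrN ger0_norm //; apply: mulr_ge0; lra.
have ey1 : `|y1| = y2.
  apply/eqP; rewrite eq_le ly /=.
  have : x2 * y2 <= x2 * `|y1|.
    by rewrite -hn ler_wpM2r.
  by rewrite ler_pM2l.
have ex1 : `|x1| = x2.
  move: hn; rewrite ey1 => hn.
  by apply: (mulIf (lt0r_neq0 hy20)).
case: (ler0P x1) => hx1; rewrite ?ex1 in hx1y1.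
-
  have ex : x1 = - x2 by move: ex1; rewrite ler0_norm // => <-; rewrite opprK.
  have ey : y1 = y2.
    move: ey1; case: (ler0P y1) => hy1 e; last by [].
    exfalso; move: hx1y1; rewrite ex; nra.
  right; move: ey; rewrite /y1 /y2 ex => ey.
  have e2 : 2 * l = b0 - b1 - b2 + b3.
    apply: (mulIf (lt0r_neq0 hx2)); lra.
  split=> //.
  have : 0 < y2 by lra.
  rewrite /y2 ex => h.
  have : 0 < (-b2 + b3 - l) * x2 by lra.
  rewrite pmulr_lgt0 //; lra.
- have ex : x1 = x2 by move: ex1; rewrite gtr0_norm.
  have ey : y1 = - y2.
    move: ey1; case: (ler0P y1) => hy1 e; first by rewrite -e opprK.
    exfalso; move: hx1y1; rewrite ex; nra.
  left; move: ey; rewrite /y1 /y2 ex => ey.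
  have e2 : 2 * l = b0 + b1 + b2 + b3.
    apply: (mulIf (lt0r_neq0 hx2)); lra.
  split=> //.
  have : 0 < y2 by lra.
  rewrite /y2 ex => h.
  have : 0 < (b2 + b3 - l) * x2 by lra.
  rewrite pmulr_lgt0 //; lra.
Qed.

Lemma sig_u b0 b1 b2 b3 : 0 <= b2 + b3 - b0 - b1 ->
  Sig b0 b1 b2 b3 ((b0 + b1 + b2 + b3) / 2).
Proof.
move=> h; exists 1, 1; split; rewrite ?normr1 ?ltr01 //; last by lra.
rewrite !mulr1; rewrite ler_norml; apply/andP; split; lra.
Qed.

Lemma sig_v b0 b1 b2 b3 : 0 <= - b0 + b1 - b2 + b3 ->
  Sig b0 b1 b2 b3 ((b0 - b1 - b2 + b3) / 2).
Proof.
move=> h; exists (-1), 1; split; rewrite ?normrN ?normr1 ?ltr01 //; last by lra.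
rewrite !mulr1 !mulrN1; rewrite ler_norml; apply/andP; split; lra.
Qed.

Lemma vander3 (c2 c1 c0 t1 t2 t3 : R) : t1 != t2 -> t1 != t3 -> t2 != t3 ->
  c2 * t1 ^+ 2 + c1 * t1 + c0 = 0 ->
  c2 * t2 ^+ 2 + c1 * t2 + c0 = 0 ->
  c2 * t3 ^+ 2 + c1 * t3 + c0 = 0 -> [/\ c2 = 0, c1 = 0 & c0 = 0].
Proof.
move=> d12 d13 d23 e1 e2 e3.
have h12 : c2 * (t1 + t2) + c1 = 0.
  have : (t1 - t2) * (c2 * (t1 + t2) + c1) = 0.
    by rewrite -[RHS](subrr 0) -{1}e1 -e2; ring.
  by move/eqP; rewrite mulf_eq0 subr_eq0 (negbTE d12) /= => /eqP.
have h13 : c2 * (t1 + t3) + c1 = 0.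
  have : (t1 - t3) * (c2 * (t1 + t3) + c1) = 0.
    by rewrite -[RHS](subrr 0) -{1}e1 -e3; ring.
  by move/eqP; rewrite mulf_eq0 subr_eq0 (negbTE d13) /= => /eqP.
have hc2 : c2 = 0.
  have : (t2 - t3) * c2 = 0.
    by rewrite -[RHS](subrr 0) -{1}h12 -h13; ring.
  by move/eqP; rewrite mulf_eq0 subr_eq0 (negbTE d23) /= => /eqP.
have hc1 : c1 = 0 by move: h12; rewrite hc2 mul0r add0r.
split=> //; move: e1; rewrite hc2 hc1; lra.
Qed.

Lemma lemF (x z a b t1 t2 t3 : R) : x != z -> t1 != t2 -> t1 != t3 -> t2 != t3 ->
  (x - (a + b * t1)) * (z - (a + b * t1)) - t1 ^+ 2 = 0 ->
  (x - (a + b * t2)) * (z - (a + b * t2)) - t2 ^+ 2 = 0 ->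
  (x - (a + b * t3)) * (z - (a + b * t3)) - t3 ^+ 2 = 0 -> False.
Proof.
move=> dxz d12 d13 d23 e1 e2 e3.
have E t : (x - (a + b * t)) * (z - (a + b * t)) - t ^+ 2 =
   (b ^+ 2 - 1) * t ^+ 2 + (- b * (x + z - 2 * a)) * t + (x - a) * (z - a).
  by ring.
rewrite E in e1; rewrite E in e2; rewrite E in e3.
case: (@vander3 _ _ _ _ _ _ d12 d13 d23 e1 e2 e3) => h2 h1 h0.
have hb : b != 0 by apply/eqP => hb; move: h2; rewrite hb; lra.
have ha : x + z - 2 * a = 0.
  by move/eqP: h1; rewrite mulf_eq0 oppr_eq0 (negbTE hb) /= => /eqP.
have : (x - z) ^+ 2 = 0.
  have -> : (x - z) ^+ 2 = (x + z - 2 * a) ^+ 2 - 4 * ((x - a) * (z - a)) by ring.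
  by rewrite ha h0; ring.
by move/eqP; rewrite expf_eq0 /= subr_eq0 (negbTE dxz).
Qed.

Lemma quad (x z y l r1 r2 : R) : r1 + r2 = x + z -> r1 * r2 = x * z - y ^+ 2 ->
  (x - l) * (z - l) - y ^+ 2 = 0 -> l = r1 \/ l = r2.
Proof.
move=> s p e.
have : (l - r1) * (l - r2) = 0.
  have -> : (l - r1) * (l - r2) = l ^+ 2 - (r1 + r2) * l + r1 * r2 by ring.
  rewrite s p -e; ring.
by move/eqP; rewrite mulf_eq0 !subr_eq0 => /orP [/eqP|/eqP]; [left|right].
Qed.

Lemma neq_div (c g i j : R) : g != 0 -> i != j -> (c + i) / g != (c + j) / g.
Proof.
move=> hg hij; apply/eqP => h; move/eqP: hij; apply.
have := congr1 ( *%R^~ g) h; rewrite !divfK //; lra.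
Qed.

Lemma key (uP uQ uS gP gQ gS : R) :
  (forall x y z l : R, 2 * l = x * uP + z * uQ + y * uS ->
     0 <= x * gP + z * gQ + y * gS ->
     (x - l) * (z - l) - y ^+ 2 = 0 \/ (2 * l = x + 2 * y + z /\ x <= z)
       \/ (2 * l = x - 2 * y + z /\ x <= z)) ->
  [/\ gS = 0, gQ = - gP & gP < 0] /\ [/\ uP = 1, uQ = 1 & (uS = 2 \/ uS = -2)].
Proof.
move=> H.
have hgS : gS = 0.
  apply/eqP/negP => /negP hg.
  pose t (i : R) := (`|gP| + i) / gS.
  have Ht : forall i, 0 < i -> (1 - (uP / 2 + uS / 2 * t i)) * (0 - (uP / 2 + uS / 2 * t i))
                 - t i ^+ 2 = 0.
    move=> i hi.
    have hgt : t i * gS = `|gP| + i by rewrite /t divfK.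
    have e1 : 2 * (uP / 2 + uS / 2 * t i) = 1 * uP + 0 * uQ + t i * uS by lra.
    have e2 : 0 <= 1 * gP + 0 * gQ + t i * gS.
      have : - gP <= `|gP| by rewrite -normrN ler_norm.
      lra.
    have [h|[[_ h]|[_ h]]] := H 1 (t i) 0 _ e1 e2; [by [] | lra | lra].
  apply: (@lemF 1 0 (uP / 2) (uS / 2) (t 1) (t 2) (t 3)).
  - by rewrite oner_eq0.
  - by apply: neq_div => //; apply/eqP => hh; lra.
  - by apply: neq_div => //; apply/eqP => hh; lra.
  - by apply: neq_div => //; apply/eqP => hh; lra.
  - by apply: Ht; lra.
  - by apply: Ht; lra.
  - by apply: Ht; lra.
have hneg : forall x z, z < x -> x * gP + z * gQ < 0.
  move=> x z hxz; rewrite ltNge; apply/negP => hge.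
  have Ht : forall y, (x - ((x * uP + z * uQ) / 2 + uS / 2 * y)) *
       (z - ((x * uP + z * uQ) / 2 + uS / 2 * y)) - y ^+ 2 = 0.
    move=> y.
    have e1 : 2 * ((x * uP + z * uQ) / 2 + uS / 2 * y) = x * uP + z * uQ + y * uS by lra.
    have e2 : 0 <= x * gP + z * gQ + y * gS by rewrite hgS; lra.
    have [h|[[_ h]|[_ h]]] := H x y z _ e1 e2; [by [] | lra | lra].
  apply: (@lemF x z ((x * uP + z * uQ) / 2) (uS / 2) 1 2 3); rewrite ?Ht //.
  - by rewrite gt_eqF.
  - by apply/eqP => hh; lra.
  - by apply/eqP => hh; lra.
  - by apply/eqP => hh; lra.
have hgP : gP < 0 by have := hneg 1 0 ltr01; lra.
have hgQ : gQ = - gP.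
  apply/eqP/negP => /negP hg.
  have hs : gP + gQ != 0 by apply: contra hg => /eqP h; apply/eqP; lra.
  have := hneg (- gP / (gP + gQ) + 1) (- gP / (gP + gQ)).
  have e : (- gP / (gP + gQ) + 1) * gP + - gP / (gP + gQ) * gQ
      = - gP / (gP + gQ) * (gP + gQ) + gP by ring.
  rewrite e divfK //; lra.
have Hlt : forall x y z l, 2 * l = x * uP + z * uQ + y * uS -> x < z ->
     (x - l) * (z - l) - y ^+ 2 = 0 \/ 2 * l = x + 2 * y + z
       \/ 2 * l = x - 2 * y + z.
  move=> x y z l e hxz.
  have hg : 0 <= x * gP + z * gQ + y * gS by rewrite hgS hgQ; nra.
  have [h|[[h _]|[h _]]] := H x y z l e hg; [by left|by right;left|by right;right].
have P4 : forall x y z r1 r2 : R, r1 + r2 = x + z -> r1 * r2 = x * z - y ^+ 2 -> x < z ->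
   let l := (x * uP + z * uQ + y * uS) / 2 in
   l = r1 \/ l = r2 \/ 2 * l = x + 2 * y + z \/ 2 * l = x - 2 * y + z.
  move=> x y z r1 r2 s p hxz l.
  have [h|[h|h]] := Hlt x y z l (ltac:(rewrite /l; lra)) hxz.
  - by case: (quad _ _ _ _ _ _ s p h) => ->; [left|right;left].
  - by right; right; left.
  - by right; right; right.
have [hQ hS] : uQ = 1 /\ (uS = 2 \/ uS = -2).
  have := P4 0 0 1 0 1 (ltac:(lra)) (ltac:(lra)) ltr01.
  have := P4 0 (2/3) 1 (4/3) (-1/3) (ltac:(lra)) (ltac:(lra)) ltr01.
  have := P4 0 (3/8) 1 (9/8) (-1/8) (ltac:(lra)) (ltac:(lra)) ltr01.
  rewrite /=.
  move=> [h1|[h1|[h1|h1]]] [h2|[h2|[h2|h2]]] [h3|[h3|[h3|h3]]]; lra.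
have hP : uP = 1.
  have := P4 (-1) 0 0 (-1) 0 (ltac:(lra)) (ltac:(lra)) (ltac:(lra)).
  have := P4 (-1) 0 1 (-1) 1 (ltac:(lra)) (ltac:(lra)) (ltac:(lra)).
  rewrite /=.
  move=> [h1|[h1|[h1|h1]]] [h2|[h2|[h2|h2]]]; lra.
by split; split.
Qed.
Lemma e01 : (ord0 == ord_max :> 'I_2) = false. Proof. by []. Qed.
Lemma e10 : (ord_max == ord0 :> 'I_2) = false. Proof. by []. Qed.
Ltac simx := rewrite ?mxE ?eqxx ?e01 ?e10 /= ?mulr1n ?mulr0n ?addr0 ?add0r.
Lemma mx2E (a b c d : R) : [/\ mx2 a b c d ord0 ord0 = a, mx2 a b c d ord0 ord_max = b,
   mx2 a b c d ord_max ord0 = c & mx2 a b c d ord_max ord_max = d].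
Proof. by rewrite !mxE. Qed.
Lemma mx2_eq (M : 'M[R]_2) a b c d : M ord0 ord0 = a -> M ord0 ord_max = b ->
  M ord_max ord0 = c -> M ord_max ord_max = d -> M = mx2 a b c d.
Proof.
move=> h1 h2 h3 h4; apply/matrixP => i j.
by case: (I2 i) => ->; case: (I2 j) => ->; rewrite !mxE.
Qed.
Lemma mx2_lin (k a b c d a' b' c' d' : R) :
  k *: mx2 a b c d + mx2 a' b' c' d' = mx2 (k * a + a') (k * b + b') (k * c + c') (k * d + d').
Proof. by apply: mx2_eq; simx. Qed.
Lemma E00m : @E R ord0 ord0 = mx2 (1 : R) 0 0 0.
Proof. by apply: mx2_eq; simx. Qed.
Lemma E11m : @E R ord_max ord_max = mx2 (0 : R) 0 0 1.
Proof. by apply: mx2_eq; simx. Qed.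
Lemma Eoffm : @E R ord0 ord_max + @E R ord_max ord0 = mx2 (0 : R) 1 1 0.
Proof. by apply/matrixP => i j; case: (I2 i) => ->; case: (I2 j) => ->; simx. Qed.
Lemma mx20 : mx2 (0 : R) 0 0 0 = 0.
Proof. by apply/esym/mx2_eq; rewrite !mxE. Qed.
Lemma inWs sym (x y z : R) : inW sym (mx2 x y y z).
Proof. move=> _; apply/matrixP => i j; by case: (I2 i) => ->; case: (I2 j) => ->; rewrite !mxE. Qed.
End Aux.


Arguments Sig {R}. Arguments Leig_iff {R}. Arguments sig_sub {R}. Arguments sig_u {R}.
Arguments sig_v {R}. Arguments key {R}. Arguments mx2E {R}. Arguments mx2_eq {R}.
Arguments inWs {R}. Arguments mx20 {R}. Arguments mx2_lin {R}.

Theorem lemma4p3 (R : realType) (sym : bool) (phi : 'M[R]_2 -> 'M[R]_2)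
  (phiW : forall A, inW sym A -> inW sym (phi A))
  (phi_lin : forall (c : R) A B, inW sym A -> inW sym B ->
      phi (c *: A + B) = c *: phi A + phi B)
  (phi_pres : forall A, inW sym A -> Lspectrum (phi A) = Lspectrum A) :
  (exists a : R, exists s : R, [/\ a <= 0, s = 1 \/ s = -1,
     phi (@E R ord0 ord0) =
       mx2 (1 - a) (- s * Num.sqrt (a ^+ 2 - a)) (s * Num.sqrt (a ^+ 2 - a)) a
   & phi (@E R ord_max ord_max) =
       mx2 a (s * Num.sqrt (a ^+ 2 - a)) (- s * Num.sqrt (a ^+ 2 - a)) (1 - a)])
  /\ (exists m r t : R, (t = 1 \/ t = -1) /\
       phi (@E R ord0 ord_max + @E R ord_max ord0) = mx2 m r (- r + t * 2) (- m))
  /\ (sym ->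
       [/\ phi (@E R ord0 ord0) = @E R ord0 ord0,
           phi (@E R ord_max ord_max) = @E R ord_max ord_max
         & exists m r : R, (r = 1 \/ r = -1) /\
             phi (@E R ord0 ord_max + @E R ord_max ord0) = mx2 m r r (- m)]).
Proof.
have phi0 : phi 0 = 0.
  have h0 : inW sym (0 : 'M[R]_2) by rewrite -mx20; exact: inWs.
  have := phi_lin 1 0 0 h0 h0; rewrite !scale1r !addr0 => h.
  by apply: (@addrI _ (phi 0)); rewrite addr0 -h.
rewrite E00m E11m Eoffm.
set P := phi (mx2 1 0 0 0); set Q := phi (mx2 0 0 0 1); set S := phi (mx2 0 1 1 0).
have hphi : forall x y z : R, phi (mx2 x y y z) = x *: P + (z *: Q + y *: S).
  move=> x y z.
  have e1 : mx2 x y y z = x *: mx2 1 0 0 0 + mx2 0 y y z.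
    by rewrite mx2_lin; congr mx2; ring.
  have e2 : mx2 0 y y z = z *: mx2 0 0 0 1 + mx2 0 y y 0.
    by rewrite mx2_lin; congr mx2; ring.
  have e3 : mx2 0 y y 0 = y *: mx2 0 1 1 0 + mx2 0 0 0 0.
    by rewrite mx2_lin; congr mx2; ring.
  rewrite e1 phi_lin; [|exact: inWs|exact: inWs].
  rewrite e2 phi_lin; [|exact: inWs|exact: inWs].
  rewrite e3 phi_lin; [|exact: inWs|exact: inWs].
  by rewrite mx20 phi0 addr0.
have H : forall x y z l : R,
   Sig (x * P ord0 ord0 + (z * Q ord0 ord0 + y * S ord0 ord0))
       (x * P ord0 ord_max + (z * Q ord0 ord_max + y * S ord0 ord_max))
       (x * P ord_max ord0 + (z * Q ord_max ord0 + y * S ord_max ord0))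
       (x * P ord_max ord_max + (z * Q ord_max ord_max + y * S ord_max ord_max)) l
   <-> Sig x y y z l.
  move=> x y z l.
  have h1 := Leig_iff (phi (mx2 x y y z)) l.
  have h2 := Leig_iff (mx2 x y y z) l.
  have e := phi_pres _ (inWs sym x y z).
  rewrite /Lspectrum in e; rewrite e in h1.
  rewrite hphi !mxE in h1.
  case: (mx2E x y y z) h2 => -> -> -> -> h2.
  by rewrite -h1 -h2.
set p0 := P ord0 ord0 in H *; set p1 := P ord0 ord_max in H *; set p2 := P ord_max ord0 in H *; set p3 := P ord_max ord_max in H *.
set q0 := Q ord0 ord0 in H *; set q1 := Q ord0 ord_max in H *; set q2 := Q ord_max ord0 in H *; set q3 := Q ord_max ord_max in H *.
set s0 := S ord0 ord0 in H *; set s1 := S ord0 ord_max in H *; set s2 := S ord_max ord0 in H *; set s3 := S ord_max ord_max in H *.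
have Hsub : forall x y z l : R, Sig x y y z l ->
  (x - l) * (z - l) - y ^+ 2 = 0 \/ (2 * l = x + 2 * y + z /\ x <= z) \/ (2 * l = x - 2 * y + z /\ x <= z).
  move=> x y z l hs.
  have [h|[[h1 h2]|[h1 h2]]] := sig_sub _ _ _ _ _ hs.
  - by left; rewrite expr2.
  - by right; left; split; lra.
  - by right; right; split; lra.
have Hu : forall x y z l : R,
   2 * l = x * (p0 + p1 + p2 + p3) + z * (q0 + q1 + q2 + q3) + y * (s0 + s1 + s2 + s3) ->
   0 <= x * (p2 + p3 - p0 - p1) + z * (q2 + q3 - q0 - q1) + y * (s2 + s3 - s0 - s1) ->
   (x - l) * (z - l) - y ^+ 2 = 0 \/ (2 * l = x + 2 * y + z /\ x <= z) \/ (2 * l = x - 2 * y + z /\ x <= z).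
  move=> x y z l e g; apply: Hsub; apply/H.
  have hs := sig_u (x * p0 + (z * q0 + y * s0)) (x * p1 + (z * q1 + y * s1)) (x * p2 + (z * q2 + y * s2)) (x * p3 + (z * q3 + y * s3)) (ltac:(lra)).
  by rewrite (_ : ((x * p0 + (z * q0 + y * s0)) + (x * p1 + (z * q1 + y * s1)) + (x * p2 + (z * q2 + y * s2)) + (x * p3 + (z * q3 + y * s3))) / 2 = l) in hs; [|lra].
have Hv : forall x y z l : R,
   2 * l = x * (p0 - p1 - p2 + p3) + z * (q0 - q1 - q2 + q3) + y * (s0 - s1 - s2 + s3) ->
   0 <= x * (- p0 + p1 - p2 + p3) + z * (- q0 + q1 - q2 + q3) + y * (- s0 + s1 - s2 + s3) ->
   (x - l) * (z - l) - y ^+ 2 = 0 \/ (2 * l = x + 2 * y + z /\ x <= z) \/ (2 * l = x - 2 * y + z /\ x <= z).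
  move=> x y z l e g; apply: Hsub; apply/H.
  have hs := sig_v (x * p0 + (z * q0 + y * s0)) (x * p1 + (z * q1 + y * s1)) (x * p2 + (z * q2 + y * s2)) (x * p3 + (z * q3 + y * s3)) (ltac:(lra)).
  by rewrite (_ : ((x * p0 + (z * q0 + y * s0)) - (x * p1 + (z * q1 + y * s1)) - (x * p2 + (z * q2 + y * s2)) + (x * p3 + (z * q3 + y * s3))) / 2 = l) in hs; [|lra].
have [[gSu gQu gPu] [uPu uQu uSu]] := key _ _ _ _ _ _ Hu.
have [[gSv gQv gPv] [uPv uQv uSv]] := key _ _ _ _ _ _ Hv.
set ku := - (p2 + p3 - p0 - p1); set kv := - (- p0 + p1 - p2 + p3).
have ku0 : 0 < ku by rewrite /ku; lra.
have kv0 : 0 < kv by rewrite /kv; lra.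
have hp0 : p0 = (2 + ku + kv) / 4 by rewrite /ku /kv; lra.
have hp1 : p1 = (ku - kv) / 4 by rewrite /ku /kv; lra.
have hp2 : p2 = (kv - ku) / 4 by rewrite /ku /kv; lra.
have hp3 : p3 = (2 - ku - kv) / 4 by rewrite /ku /kv; lra.
have hq0 : q0 = (2 - ku - kv) / 4 by rewrite /ku /kv; lra.
have hq1 : q1 = (kv - ku) / 4 by rewrite /ku /kv; lra.
have hq2 : q2 = (ku - kv) / 4 by rewrite /ku /kv; lra.
have hq3 : q3 = (2 + ku + kv) / 4 by rewrite /ku /kv; lra.
have Hdet : forall t l : R, Sig 0 t t 1 l ->
   ((0 * p0 + (1 * q0 + t * s0)) - l) * ((0 * p3 + (1 * q3 + t * s3)) - l) - (0 * p1 + (1 * q1 + t * s1)) * (0 * p2 + (1 * q2 + t * s2)) = 0 \/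
   2 * l = (0 * p0 + (1 * q0 + t * s0)) + (0 * p1 + (1 * q1 + t * s1)) + (0 * p2 + (1 * q2 + t * s2)) + (0 * p3 + (1 * q3 + t * s3)) \/
   2 * l = (0 * p0 + (1 * q0 + t * s0)) - (0 * p1 + (1 * q1 + t * s1)) - (0 * p2 + (1 * q2 + t * s2)) + (0 * p3 + (1 * q3 + t * s3)).
  move=> t l /H hs.
  have [h|[[h _]|[h _]]] := sig_sub _ _ _ _ _ hs; by [left|right;left|right;right].
have hSuv : (s0 + s1 + s2 + s3 = 2 /\ s0 - s1 - s2 + s3 = -2) \/
            (s0 + s1 + s2 + s3 = -2 /\ s0 - s1 - s2 + s3 = 2).
  case: uSu => hu; case: uSv => hv; [ | by left | by right | ].
  - have e0 : s0 = 1 by lra.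
    have e3 : s3 = 1 by lra.
    have e1 : s1 = 0 by lra.
    have e2 : s2 = 0 by lra.
    have A1 := Hdet (2/3) _ (sig_v 0 (2/3) (2/3) 1 (ltac:(lra))).
    have A2 := Hdet (3/8) _ (sig_v 0 (3/8) (3/8) 1 (ltac:(lra))).
    rewrite e0 e1 e2 e3 hq0 hq1 hq2 hq3 in A1 A2.
    have K1 : ku * kv = 64 / 9 by case: A1 => [h|[h|h]]; lra.
    have K2 : ku * kv = 9 / 4 by case: A2 => [h|[h|h]]; lra.
    lra.
  - have e0 : s0 = -1 by lra.
    have e3 : s3 = -1 by lra.
    have e1 : s1 = 0 by lra.
    have e2 : s2 = 0 by lra.
    have A1 := Hdet (2/3) _ (sig_u 0 (2/3) (2/3) 1 (ltac:(lra))).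
    have A2 := Hdet (3/8) _ (sig_u 0 (3/8) (3/8) 1 (ltac:(lra))).
    rewrite e0 e1 e2 e3 hq0 hq1 hq2 hq3 in A1 A2.
    have K1 : ku * kv = 64 / 9 by case: A1 => [h|[h|h]]; lra.
    have K2 : ku * kv = 9 / 4 by case: A2 => [h|[h|h]]; lra.
    lra.
have kk : ku * kv = 1.
  have hs : Sig (0:R) 0 0 1 1.
    exists 0, 1; split; [lra | rewrite normr0; lra | | ring].
    by rewrite (_ : ((0:R) - 1) * 0 + 0 * 1 = 0) ?normr0; [lra | ring].
  move/H: hs => hs.
  have := sig_sub _ _ _ _ _ hs.
  rewrite !mul0r !mul1r !add0r !addr0 hq0 hq1 hq2 hq3.
  case=> [h|[[h _]|[h _]]]; lra.
have eP : P = mx2 ((2 + ku + kv) / 4) ((ku - kv) / 4) ((kv - ku) / 4) ((2 - ku - kv) / 4).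
  by apply: mx2_eq; [exact: hp0 | exact: hp1 | exact: hp2 | exact: hp3].
have eQ : Q = mx2 ((2 - ku - kv) / 4) ((kv - ku) / 4) ((ku - kv) / 4) ((2 + ku + kv) / 4).
  by apply: mx2_eq; [exact: hq0 | exact: hq1 | exact: hq2 | exact: hq3].
pose e := (s0 + s1 + s2 + s3) / 2.
have he : e = 1 \/ e = -1 by rewrite /e; case: hSuv => [[h1 h2]|[h1 h2]]; [left|right]; lra.
have eS : S = mx2 0 e e 0.
  have hs0 : s0 = 0 by case: hSuv; lra.
  have hs1 : s1 = e by rewrite /e; case: hSuv; lra.
  have hs2 : s2 = e by rewrite /e; case: hSuv; lra.
  have hs3 : s3 = 0 by case: hSuv; lra.
  by apply: mx2_eq; [exact: hs0 | exact: hs1 | exact: hs2 | exact: hs3].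
pose a := (2 - ku - kv) / 4.
pose c := (ku - kv) / 4.
have h4 : 4 <= (ku + kv) ^+ 2.
  have := sqr_ge0 (ku - kv); rewrite !expr2; nra.
have h2 : 2 <= ku + kv.
  rewrite leNgt; apply/negP => hl; move: h4; rewrite expr2; nra.
have ha : a <= 0 by rewrite /a; lra.
have hsq : Num.sqrt (a ^+ 2 - a) = `|c|.
  rewrite (_ : a ^+ 2 - a = c ^+ 2) ?sqrtr_sqr //.
  rewrite /a /c; nra.
split; last split.
- case: (lerP 0 c) => hc.
  + exists a, (-1); split; [exact: ha | by right | |]; rewrite hsq ger0_norm //.
    * by rewrite eP; f_equal; rewrite /a /c; lra.
    * by rewrite eQ; f_equal; rewrite /a /c; lra.
  + exists a, 1; split; [exact: ha | by left | |]; rewrite hsq ltr0_norm //.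
    * by rewrite eP; f_equal; rewrite /a /c; lra.
    * by rewrite eQ; f_equal; rewrite /a /c; lra.
- exists 0, e, e; split => //.
  by rewrite eS; f_equal; ring.
- move=> hsym.
  have hPs := phiW _ (inWs sym 1 0 0) hsym.
  have := congr1 (fun M : 'M[R]_2 => M ord0 ord_max) hPs.
  rewrite mxE => e12; change (p2 = p1) in e12.
  have hk : ku = kv by lra.
  have hk1 : ku = 1.
    have : (ku - 1) * (ku + 1) = 0 by rewrite -hk in kk; nra.
    move/eqP; rewrite mulf_eq0 => /orP [/eqP|/eqP] h; lra.
  have hk2 : kv = 1 by lra.
  split.
  + by rewrite eP hk1 hk2; f_equal; lra.
  + by rewrite eQ hk1 hk2; f_equal; lra.
  + by exists 0, e; split => //; rewrite eS; f_equal; ring.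
Qed.
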